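(* Let $\Phi$ be a real $N \times d$ matrix satisfying the Restricted Isometry Condition with parameters $(2n, \varepsilon)$ for $\varepsilon = 0.03/\sqrt{\log n}$. Let $v \neq 0$ be an $n$-sparse vector in $\mathbb{R}^d$ and $x = \Phi v$. Then at any iteration of ROMP run on input $x$ and sparsity level $n$, after the regularization step, the newly selected set $J_0$ satisfies $J_0 \neq \emptyset$, $J_0 \cap I = \emptyset$ (where $I$ is the index set at the start of that iteration), and $$|J_0 \cap \mathrm{supp}(v)| \ge \tfrac{1}{2}|J_0|.$$
   Context: A vector $v \in \mathbb{R}^d$ is $n$-sparse if $|\mathrm{supp}(v)| \le n$. A matrix $\Phi$ satisfies the Restricted Isometry Condition with parameters $(m,\varepsilon)$, $\varepsilon\in(0,1)$, if $(1-\varepsilon)\|w\|_2 \le \|\Phi w\|_2 \le (1+\varepsilon)\|w\|_2$ for all $m$-sparse $w$. For a vector $y$, $y|_T$ denotes its restriction to the coordinates in $T$. ROMP with input $x \in \mathbb{R}^N$ and sparsity level $n$: Initialize $I = \emptyset$, $r = x$. Repeat until $r = 0$: (Identify) let $u = \Phi^* r$ and choose a set $J$ of the $n$ biggest coordinates of $u$ in magnitude, or all nonzero coordinates of $u$, whichever set is smaller; (Regularize) among all subsets $J_0 \subset J$ with $|u(i)| \le 2|u(j)|$ for all $i,j\in J_0$, choose one maximizing $\|u|_{J_0}\|_2$; (Update) $I \leftarrow I \cup J_0$, $y = \operatorname{argmin}_{z \in \mathbb{R}^I}\|x - \Phi z\|_2$, $r = x - \Phi y$. Output $I$. *)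

(* Defs.v *)
From HB Require Import structures.
From mathcomp Require Import all_boot all_order all_algebra.
From mathcomp Require Import reals exp.
Set Implicit Arguments. Unset Strict Implicit. Unset Printing Implicit Defensive.
Import Order.TTheory GRing.Theory Num.Theory.
Local Open Scope ring_scope.

Section ROMP.
Variable R : realType.

Definition norm2 {k : nat} (w : 'cV[R]_k) : R := Num.sqrt (\sum_i w i 0 ^+ 2).

Definition supp {k : nat} (w : 'cV[R]_k) : {set 'I_k} := [set i | w i 0 != 0].
Definition sparse {k : nat} (m : nat) (w : 'cV[R]_k) : Prop := (#|supp w| <= m)%N.

Definition restrict {k : nat} (w : 'cV[R]_k) (T : {set 'I_k}) : 'cV[R]_k :=
  \col_i (if i \in T then w i 0 else 0).

Definition RIC {N d : nat} (Phi : 'M[R]_(N, d)) (m : nat) (eps : R) : Prop :=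
  0 < eps < 1 /\
  forall w : 'cV[R]_d, sparse m w ->
    (1 - eps) * norm2 w <= norm2 (Phi *m w) /\ norm2 (Phi *m w) <= (1 + eps) * norm2 w.

Definition romp_identify {d : nat} (n : nat) (u : 'cV[R]_d) (J : {set 'I_d}) : Prop :=
  let nz := [set i | u i 0 != 0] in
  if (#|nz| <= n)%N then J = nz
  else #|J| = n /\ (forall i j, i \in J -> j \notin J -> `|u j 0| <= `|u i 0|).

Definition comparable_set {d : nat} (u : 'cV[R]_d) (J0 : {set 'I_d}) : Prop :=
  forall i j, i \in J0 -> j \in J0 -> `|u i 0| <= 2 * `|u j 0|.

Definition romp_regularize {d : nat} (u : 'cV[R]_d) (J J0 : {set 'I_d}) : Prop :=
  J0 \subset J /\ comparable_set u J0 /\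
  (forall J1 : {set 'I_d}, J1 \subset J -> comparable_set u J1 ->
     norm2 (restrict u J1) <= norm2 (restrict u J0)).

Definition is_argmin {N d : nat} (Phi : 'M[R]_(N, d)) (x : 'cV[R]_N)
    (I : {set 'I_d}) (y : 'cV[R]_d) : Prop :=
  supp y \subset I /\
  (forall z : 'cV[R]_d, supp z \subset I -> norm2 (x - Phi *m y) <= norm2 (x - Phi *m z)).

(* romp_reach Phi x n I r : (I, r) is the state (index set, residual) at the
   start of some iteration of some run of ROMP on input x, sparsity level n. *)
Inductive romp_reach {N d : nat} (Phi : 'M[R]_(N, d)) (x : 'cV[R]_N) (n : nat)
  : {set 'I_d} -> 'cV[R]_N -> Prop :=
| romp_init : romp_reach Phi x n set0 x
| romp_step I r J J0 y :
    romp_reach Phi x n I r -> r != 0 ->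
    romp_identify n (Phi^T *m r) J ->
    romp_regularize (Phi^T *m r) J J0 ->
    is_argmin Phi x (I :|: J0) y ->
    romp_reach Phi x n (I :|: J0) (x - Phi *m y).

End ROMP.

(* Main.v *)
Require Import Defs.
From HB Require Import structures.
From mathcomp Require Import all_boot all_order all_algebra.
From mathcomp Require Import reals exp.
From mathcomp Require Import ring lra zify.
Set Implicit Arguments. Unset Strict Implicit. Unset Printing Implicit Defensive.
Import Order.TTheory GRing.Theory Num.Theory.
Local Open Scope ring_scope.


Section Basic.
Variable R : realType.

Definition dot {k : nat} (a b : 'cV[R]_k) : R := \sum_i a i 0 * b i 0.
Definition sq {k : nat} (a : 'cV[R]_k) : R := dot a a.
Definition suppIn {k : nat} (a : 'cV[R]_k) (T : {set 'I_k}) :=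
  forall i, i \notin T -> a i 0 = 0.
Definition sqT {k : nat} (u : 'cV[R]_k) (T : {set 'I_k}) : R :=
  \sum_(i in T) u i 0 ^+ 2.

Lemma dotC k (a b : 'cV[R]_k) : dot a b = dot b a.
Proof. by apply: eq_bigr => i _; rewrite mulrC. Qed.

Lemma dotDl k (a b c : 'cV[R]_k) : dot (a + b) c = dot a c + dot b c.
Proof. by rewrite /dot -big_split; apply: eq_bigr => i _; rewrite mxE mulrDl. Qed.

Lemma dotNl k (a c : 'cV[R]_k) : dot (- a) c = - dot a c.
Proof. by rewrite /dot -sumrN; apply: eq_bigr => i _; rewrite mxE mulNr. Qed.

Lemma dotBl k (a b c : 'cV[R]_k) : dot (a - b) c = dot a c - dot b c.
Proof. by rewrite dotDl dotNl. Qed.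

Lemma dotZl k s (a c : 'cV[R]_k) : dot (s *: a) c = s * dot a c.
Proof. by rewrite /dot big_distrr; apply: eq_bigr => i _; rewrite !mxE /= mulrA. Qed.

Lemma dotDr k (a b c : 'cV[R]_k) : dot c (a + b) = dot c a + dot c b.
Proof. by rewrite dotC dotDl !(dotC c). Qed.
Lemma dotBr k (a b c : 'cV[R]_k) : dot c (a - b) = dot c a - dot c b.
Proof. by rewrite dotC dotBl !(dotC c). Qed.
Lemma dotZr k s (a c : 'cV[R]_k) : dot c (s *: a) = s * dot c a.
Proof. by rewrite dotC dotZl dotC. Qed.

Lemma dot0l k (c : 'cV[R]_k) : dot 0 c = 0.
Proof. by rewrite /dot big1 // => i _; rewrite mxE mul0r. Qed.

Lemma sq_ge0 k (a : 'cV[R]_k) : 0 <= sq a.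
Proof. by apply: sumr_ge0 => i _; rewrite -expr2 sqr_ge0. Qed.

Lemma norm2E k (a : 'cV[R]_k) : norm2 a = Num.sqrt (sq a).
Proof. by rewrite /norm2 /sq /dot; congr Num.sqrt; apply: eq_bigr => i _; rewrite expr2. Qed.

Lemma norm2_ge0 k (a : 'cV[R]_k) : 0 <= norm2 a.
Proof. by rewrite norm2E sqrtr_ge0. Qed.

Lemma norm2_sq k (a : 'cV[R]_k) : norm2 a ^+ 2 = sq a.
Proof. by rewrite norm2E sqr_sqrtr // sq_ge0. Qed.

Lemma sq_eq0 k (a : 'cV[R]_k) : sq a = 0 -> a = 0.
Proof.
move=> h; apply/matrixP => i j; rewrite (ord1 j) mxE.
have H0 : forall i, predT i -> 0 <= a i 0 * a i 0 by move=> ? _; rewrite -expr2 sqr_ge0.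
have := psumr_eq0P H0 h (isT : predT i).
by move/eqP; rewrite mulf_eq0 orbb => /eqP.
Qed.

Lemma dot_trmx N d (Phi : 'M[R]_(N, d)) (r : 'cV[R]_N) (z : 'cV[R]_d) :
  dot (Phi^T *m r) z = dot r (Phi *m z).
Proof.
rewrite /dot.
under eq_bigr do rewrite !mxE big_distrl.
rewrite exchange_big; apply: eq_bigr => j _ /=.
rewrite !mxE big_distrr; apply: eq_bigr => i _ /=.
by rewrite !mxE (mulrC (Phi j i)) mulrA.
Qed.

Lemma sqD k (a b : 'cV[R]_k) : sq (a + b) = sq a + 2 * dot a b + sq b.
Proof. rewrite /sq !dotDl !dotDr (dotC b a); ring. Qed.
Lemma sqB k (a b : 'cV[R]_k) : sq (a - b) = sq a - 2 * dot a b + sq b.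
Proof. rewrite /sq !dotBl !dotBr (dotC b a); ring. Qed.
Lemma sqZ k s (a : 'cV[R]_k) : sq (s *: a) = s ^+ 2 * sq a.
Proof. rewrite /sq dotZl dotZr; ring. Qed.

Lemma hom0 (f A c : R) : 0 <= A -> 0 <= c ->
  (forall s, `|s * f| <= c * (s ^+ 2 * A) / 2) -> f = 0.
Proof.
move=> A0 c0 H.
have D0 : 0 < c * A + 1 by nra.
set s := f / (c * A + 1).
have hf : f = s * (c * A + 1) by rewrite /s mulfVK // gt_eqF.
have h := H s; clearbody s.
rewrite hf ger0_norm in h; last by nra.
have ss : s * s <= 0 by nra.
have : s ^+ 2 == 0 by rewrite eq_le sqr_ge0 andbT expr2.
by rewrite sqrf_eq0 hf => /eqP ->; rewrite mul0r.
Qed.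

Lemma hom (f A B c : R) : 0 <= A -> 0 <= B -> 0 <= c ->
  (forall s t, `|s * t * f| <= c * (s ^+ 2 * A + t ^+ 2 * B) / 2) ->
  `|f| <= c * (Num.sqrt A * Num.sqrt B).
Proof.
move=> A0 B0 c0 H.
have hA := sqr_sqrtr A0; have hB := sqr_sqrtr B0.
have sA := sqrtr_ge0 A; have sB := sqrtr_ge0 B.
have [Ap|Az] := ltP 0 A; have [Bp|Bz] := ltP 0 B.
- have := H (Num.sqrt B) (Num.sqrt A).
  have sAp : 0 < Num.sqrt A by rewrite sqrtr_gt0.
  have sBp : 0 < Num.sqrt B by rewrite sqrtr_gt0.
  rewrite normrM ger0_norm ?mulr_ge0 // hA hB => h.
  move: sAp sBp hA hB h; move: (Num.sqrt A) (Num.sqrt B) => a b ap bp ha hb h.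
  rewrite -ha -hb in h.
  have P0 : 0 < a * b by rewrite mulr_gt0.
  have h2 : a * b * `|f| <= a * b * (c * (a * b)) by move: h; rewrite !expr2; nra.
  by rewrite (ler_pM2l P0) in h2.
- have B00 : B = 0 by apply/le_anti/andP.
  suff -> : f = 0 by rewrite normr0 mulr_ge0 // mulr_ge0.
  apply: (hom0 A0 c0) => s; have := H s 1.
  by rewrite B00 mulr1 mulr0 addr0.
- have A00 : A = 0 by apply/le_anti/andP.
  suff -> : f = 0 by rewrite normr0 mulr_ge0 // mulr_ge0.
  apply: (hom0 B0 c0) => s; have := H 1 s.
  by rewrite A00 mul1r mulr0 add0r.
- have A00 : A = 0 by apply/le_anti/andP.
  suff -> : f = 0 by rewrite normr0 mulr_ge0 // mulr_ge0.
  apply: (hom0 B0 c0) => s; have := H 1 s.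
  by rewrite A00 mul1r mulr0 add0r.
Qed.

Lemma CS k (a b : 'cV[R]_k) : `|dot a b| <= norm2 a * norm2 b.
Proof.
rewrite !norm2E.
have := @hom (dot a b) (sq a) (sq b) 1 (sq_ge0 a) (sq_ge0 b) ler01.
rewrite mul1r; apply => s t.
have h1 := sq_ge0 (s *: a + t *: b).
have h2 := sq_ge0 (s *: a - t *: b).
rewrite sqD in h1; rewrite sqB in h2.
rewrite !sqZ dotZl dotZr in h1 h2.
rewrite mul1r ler_norml; apply/andP; split; nra.
Qed.

Lemma suppIn_sparse k (a : 'cV[R]_k) T m :
  suppIn a T -> (#|T| <= m)%N -> sparse m a.
Proof.
move=> h hT; apply: leq_trans hT; apply: subset_leq_card; apply/subsetP => i.
by rewrite inE; apply: contraLR => /h ->; rewrite negbK eqxx.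
Qed.

Lemma suppInD k (a b : 'cV[R]_k) T : suppIn a T -> suppIn b T -> suppIn (a + b) T.
Proof. by move=> ha hb i hi; rewrite mxE ha // hb // addr0. Qed.
Lemma suppInB k (a b : 'cV[R]_k) T : suppIn a T -> suppIn b T -> suppIn (a - b) T.
Proof. by move=> ha hb i hi; rewrite !mxE ha // hb // subr0. Qed.
Lemma suppInZ k s (a : 'cV[R]_k) T : suppIn a T -> suppIn (s *: a) T.
Proof. by move=> ha i hi; rewrite mxE ha // mulr0. Qed.
Lemma suppInS k (a : 'cV[R]_k) (T T' : {set 'I_k}) : suppIn a T -> T \subset T' -> suppIn a T'.
Proof. by move=> ha hT i hi; apply: ha; apply: contra hi; apply: (subsetP hT). Qed.

Lemma subr_ge0_of (x y : R) : x <= y -> 0 <= y - x.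
Proof. by rewrite subr_ge0. Qed.

Lemma RIC_sq N d (Phi : 'M[R]_(N, d)) m e (w : 'cV[R]_d) : RIC Phi m e -> sparse m w ->
  (1 - e) ^+ 2 * sq w <= sq (Phi *m w) /\ sq (Phi *m w) <= (1 + e) ^+ 2 * sq w.
Proof.
case=> /andP[e0 e1] H /H [h1 h2].
rewrite -!norm2_sq.
have := norm2_ge0 w; have := norm2_ge0 (Phi *m w).
move: h1 h2; move: (norm2 w) (norm2 (Phi *m w)) => x y h1 h2 hy hx.
have p1 : 0 <= (1 - e) * x by rewrite mulr_ge0 // subr_ge0 ltW.
have q1 := mulr_ge0 (subr_ge0_of h1) (addr_ge0 hy p1).
have q2 := mulr_ge0 (subr_ge0_of h2) (addr_ge0 hy (le_trans hy h2)).
by rewrite !expr2; split; nra.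
Qed.

Lemma polar0 N d (Phi : 'M[R]_(N, d)) m e (a b : 'cV[R]_d) T :
  RIC Phi m e -> suppIn a T -> suppIn b T -> (#|T| <= m)%N ->
  `|dot (Phi *m a) (Phi *m b) - dot a b| <= (2 * e + e ^+ 2) * (sq a + sq b) / 2.
Proof.
move=> hR ha hb hT.
have [e0 e1] : 0 < e /\ e < 1 by case: hR => /andP[].
have [l1 u1] := RIC_sq hR (suppIn_sparse (suppInD ha hb) hT).
have [l2 u2] := RIC_sq hR (suppIn_sparse (suppInB ha hb) hT).
have hX := sq_ge0 (a + b); have hY := sq_ge0 (a - b).
rewrite mulmxDr !sqD in l1 u1; rewrite mulmxBr !sqB in l2 u2.
rewrite sqD in hX; rewrite sqB in hY.
have eX : 0 <= e ^+ 2 * (sq a + 2 * dot a b + sq b) by rewrite mulr_ge0 // sqr_ge0.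
have eY : 0 <= e ^+ 2 * (sq a - 2 * dot a b + sq b) by rewrite mulr_ge0 // sqr_ge0.
rewrite ler_norml; apply/andP; split; rewrite !expr2 in l1 u1 l2 u2 eX eY *; nra.
Qed.

Lemma polar N d (Phi : 'M[R]_(N, d)) m e (a b : 'cV[R]_d) T :
  RIC Phi m e -> suppIn a T -> suppIn b T -> (#|T| <= m)%N ->
  `|dot (Phi *m a) (Phi *m b) - dot a b| <= (2 * e + e ^+ 2) * (norm2 a * norm2 b).
Proof.
move=> hR ha hb hT.
have [e0 e1] : 0 < e /\ e < 1 by case: hR => /andP[].
rewrite !norm2E; apply: hom; [exact: sq_ge0|exact: sq_ge0| nra |] => s t.
have := polar0 hR (suppInZ s ha) (suppInZ t hb) hT.
by rewrite -!scalemxAr !dotZl !dotZr !sqZ mulrBr !mulrA.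
Qed.

Lemma subr_ge0_of2 (x y : R) : x <= y -> 0 <= y - x.
Proof. by rewrite subr_ge0. Qed.
End Basic.


Section Comb.
Variable R : realType.

Lemma norm2_restrict k (u : 'cV[R]_k) T : norm2 (restrict u T) = Num.sqrt (sqT u T).
Proof.
rewrite /norm2 /sqT [X in _ = Num.sqrt X]big_mkcond /=; congr Num.sqrt; apply: eq_bigr => i _.
by rewrite mxE; case: ifP => // _; rewrite expr0n.
Qed.

Lemma sqT_ge0 k (u : 'cV[R]_k) T : 0 <= sqT u T.
Proof. by apply: sumr_ge0 => i _; rewrite sqr_ge0. Qed.

Lemma sqT_sub k (u : 'cV[R]_k) (A B : {set 'I_k}) : A \subset B -> sqT u A <= sqT u B.
Proof.
move=> hAB; rewrite [sqT u B](big_setID A) /=.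
have -> : B :&: A = A by apply/setIidPr.
by rewrite lerDl; apply: sumr_ge0 => i _; rewrite sqr_ge0.
Qed.

Lemma sqT_split k (u : 'cV[R]_k) (A B : {set 'I_k}) :
  sqT u A = sqT u (A :&: B) + sqT u (A :\: B).
Proof. by rewrite /sqT (big_setID B). Qed.

Lemma sqT0 k (u : 'cV[R]_k) : sqT u set0 = 0.
Proof. by rewrite /sqT big_set0. Qed.

Lemma sqT1 k (u : 'cV[R]_k) i : sqT u [set i] = u i 0 ^+ 2.
Proof. by rewrite /sqT big_set1. Qed.

Lemma sq_le_abs (a b : R) : `|a| <= `|b| -> a ^+ 2 <= b ^+ 2.
Proof.
move=> h; rewrite -(real_normK (num_real a)) -(real_normK (num_real b)).
have ha := normr_ge0 a.
have := mulr_ge0 (subr_ge0_of h) (addr_ge0 ha (le_trans ha h)).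
rewrite !expr2; lra.
Qed.

Lemma double_sum k (A B : {set 'I_k}) (f g : 'I_k -> R) :
  (forall i j, i \in A -> j \in B -> f j <= g i) ->
  (\sum_(j in B) f j) *+ #|A| <= (\sum_(i in A) g i) *+ #|B|.
Proof.
move=> H; rewrite -sumr_const -sumrMnl; apply: ler_sum => i iA.
rewrite -sumr_const; apply: ler_sum => j jB; exact: H.
Qed.

Lemma top_n k n (u : 'cV[R]_k) (J T : {set 'I_k}) :
  romp_identify n u J -> (#|T| <= n)%N -> sqT u T <= sqT u J.
Proof.
rewrite /romp_identify; case: ifP => _.
- move=> -> _; rewrite (sqT_split u T [set i | u i 0 != 0]).
  have -> : sqT u (T :\: [set i | u i 0 != 0]) = 0.
    rewrite /sqT big1 // => i; rewrite !inE negbK => /andP[/eqP -> _]; exact: expr0n.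
  by rewrite addr0; apply: sqT_sub; apply: subsetIr.
- case=> hJ hmax hT.
  rewrite (sqT_split u T J) (sqT_split u J T) setIC lerD2l.
  have hc : (#|T :\: J| <= #|J :\: T|)%N.
    have e1 := cardsID J T; have e2 := cardsID T J; rewrite [T :&: J]setIC in e1.
    move: e1 e2 hT hJ; move: #|T :\: J| #|J :\: T| #|J :&: T| #|T| #|J| => a b c x y.
    by move=> e1 e2 h hy; rewrite -(leq_add2l c) e1 e2 hy.
  have h0 : forall i j, i \in J :\: T -> j \in T :\: J -> u j 0 ^+ 2 <= u i 0 ^+ 2.
    move=> i j; rewrite !inE => /andP[_ iJ] /andP[jJ _].
    exact: sq_le_abs (hmax i j iJ jJ).
  have := double_sum h0.
  rewrite -[X in X <= _]mulr_natr -[X in _ <= X]mulr_natr => h.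
  have hY := sqT_ge0 u (J :\: T).
  have [b0|bp] := posnP #|J :\: T|.
    have : #|T :\: J| = 0%N by move: hc; rewrite b0 leqn0 => /eqP.
    by move/eqP; rewrite cards_eq0 => /eqP ->; rewrite sqT0.
  have hab : (#|T :\: J|%:R <= #|J :\: T|%:R :> R) by rewrite ler_nat.
  have hb : (0 < #|J :\: T|%:R :> R) by rewrite ltr0n.
  move: h hab hb hY; move: (#|T :\: J|%:R) (#|J :\: T|%:R) => a b h hab hb hY.
  have : sqT u (T :\: J) * b <= sqT u (J :\: T) * b.
    by apply: le_trans h _; rewrite ler_wpM2l.
  by rewrite ler_pM2r.
Qed.

Lemma reg_max k (u : 'cV[R]_k) J J0 : romp_regularize u J J0 ->
  forall J1 : {set 'I_k}, J1 \subset J -> comparable_set u J1 -> sqT u J1 <= sqT u J0.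
Proof.
case=> _ [_ H] J1 h1 h2; have := H J1 h1 h2.
by rewrite !norm2_restrict ler_sqrt // sqT_ge0.
Qed.

Lemma comparable1 k (u : 'cV[R]_k) i : comparable_set u [set i].
Proof.
move=> a b; rewrite !inE => /eqP -> /eqP ->.
have := normr_ge0 (u i 0); lra.
Qed.

Lemma reg_bound k (u : 'cV[R]_k) J J0 K i1 : romp_regularize u J J0 -> i1 \in J ->
  (#|J| <= 4 ^ K)%N -> sqT u J <= (K.+1)%:R * sqT u J0.
Proof.
move=> hr i1J hJ.
have Hm := reg_max hr.
case: (arg_maxP (fun i => `|u i 0|) i1J) => i0 i0J i0max.
set M := `|u i0 0|.
have hM : forall i, i \in J -> `|u i 0| <= M by move=> i /i0max.
have M0 : 0 <= M := normr_ge0 _.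
pose S (m : nat) := [set i in J | `|u i 0| <= M / 2%:R ^+ m].
have SJ m : S m \subset J by apply/subsetP => i; rewrite inE => /andP[].
have step : forall m, sqT u J <= m%:R * sqT u J0 + sqT u (S m).
  elim=> [|m IH].
    have -> : S 0%N = J.
      apply/setP => i; rewrite inE expr0 divr1.
      by case iJ: (i \in J) => //=; rewrite hM.
    by rewrite mul0r add0r.
  apply: le_trans IH _.
  rewrite (sqT_split u (S m) (S m.+1)) -natr1 mulrDl mul1r.
  have h1 : sqT u (S m :&: S m.+1) <= sqT u (S m.+1) by apply: sqT_sub; apply: subsetIr.
  have h2 : sqT u (S m :\: S m.+1) <= sqT u J0.
    apply: Hm; first by apply: subset_trans (SJ m); apply: subsetDl.
    move=> a b; rewrite !inE => /andP[_ /andP[aJ ha]] /andP[hb /andP[bJ _]].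
    rewrite bJ /= -ltNge in hb.
    have P0 : 0 < 2%:R ^+ m :> R by rewrite exprn_gt0.
    have e : M / 2%:R ^+ m = 2 * (M / 2%:R ^+ m.+1) by rewrite exprS; field; rewrite gt_eqF.
    rewrite e in ha; lra.
  lra.
apply: le_trans (step K) _.
rewrite -natr1 mulrDl mul1r lerD2l.
have hM2 : M ^+ 2 <= sqT u J0.
  have := Hm [set i0]; rewrite sqT1 -(real_normK (num_real (u i0 0))); apply.
    by rewrite sub1set.
  exact: comparable1.
apply: le_trans hM2.
have P0 : 0 < 2%:R ^+ K :> R by rewrite exprn_gt0.
apply: (@le_trans _ _ (\sum_(i in S K) (M / 2%:R ^+ K) ^+ 2)).
  apply: ler_sum => i; rewrite inE => /andP[_ hi].
  by apply: sq_le_abs; rewrite (ger0_norm (divr_ge0 M0 (ltW P0))).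
rewrite sumr_const -(mulr_natr ((M / 2%:R ^+ K) ^+ 2) #|S K|).
have hc : (#|S K|%:R <= (2%:R ^+ K) ^+ 2 :> R).
  rewrite exprAC -natrX -natrX ler_nat; apply: leq_trans hJ.
  exact: subset_leq_card.
have hq : (M / 2%:R ^+ K) ^+ 2 * (2%:R ^+ K) ^+ 2 = M ^+ 2.
  by rewrite -exprMn divfK // gt_eqF.
rewrite -hq; apply: ler_wpM2l => //; exact: sqr_ge0.
Qed.

End Comb.


Section Core.
Variable R : realType.

Definition gam (e : R) := (2 * e + e ^+ 2) + (1 + e) ^+ 2 * (2 * e + e ^+ 2) / (1 - e) ^+ 2.

Lemma dot_delta k (u : 'cV[R]_k) i : dot u (\col_j (j == i)%:R) = u i 0.
Proof.
rewrite /dot (bigD1 i) //= big1 ?addr0 => [|j /negPf hj]; rewrite mxE ?eqxx ?mulr1 //.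
by rewrite hj mulr0.
Qed.

Lemma dot_zero k (a b : 'cV[R]_k) : (forall i, a i 0 * b i 0 = 0) -> dot a b = 0.
Proof. by move=> h; rewrite /dot big1. Qed.

Lemma dot_restrict k (a b : 'cV[R]_k) T : suppIn b T -> dot a b = dot (restrict a T) b.
Proof.
move=> hb; apply: eq_bigr => i _; rewrite mxE; case: ifP => // /negbT /hb ->.
by rewrite !mulr0.
Qed.

Lemma dot_restrict_self k (u : 'cV[R]_k) T : dot u (restrict u T) = sqT u T.
Proof.
rewrite /dot /sqT [X in _ = X]big_mkcond /=; apply: eq_bigr => i _; rewrite mxE.
by case: ifP; rewrite ?mulr0 // expr2.
Qed.

Lemma suppIn_restrict k (u : 'cV[R]_k) T : suppIn (restrict u T) T.
Proof. by move=> i hi; rewrite mxE (negPf hi). Qed.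

Lemma RIC_e N d (Phi : 'M[R]_(N, d)) m e : RIC Phi m e -> 0 < e /\ e < 1.
Proof. by case=> /andP[]. Qed.

Lemma RIC_up N d (Phi : 'M[R]_(N, d)) m e (w : 'cV[R]_d) : RIC Phi m e -> sparse m w ->
  norm2 (Phi *m w) <= (1 + e) * norm2 w.
Proof. by case=> _ H /H []. Qed.

Lemma inner N d n (Phi : 'M[R]_(N, d)) e (v0 g z : 'cV[R]_d) (I T0 T : {set 'I_d}) :
  RIC Phi (2 * n) e -> suppIn v0 T0 -> suppIn g I -> suppIn z T ->
  (#|I| <= 2 * n)%N -> (#|T0| <= n)%N -> (#|T| <= n)%N ->
  (1 - e) ^+ 2 * norm2 g <= (2 * e + e ^+ 2) * norm2 v0 ->
  `|dot (Phi *m v0 - Phi *m g) (Phi *m z) - dot v0 z| <= gam e * norm2 v0 * norm2 z.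
Proof.
move=> hR hv0 hg hz cI cT0 cT hG.
have [e0 e1] := RIC_e hR.
rewrite dotBl.
have h1 : `|dot (Phi *m v0) (Phi *m z) - dot v0 z| <= (2 * e + e ^+ 2) * (norm2 v0 * norm2 z).
  apply: (polar (T := T0 :|: T)) hR _ _ _.
  - by apply: suppInS hv0 _; apply: subsetUl.
  - by apply: suppInS hz _; apply: subsetUr.
  - by apply: leq_trans (leq_card_setU _ _) _; rewrite mul2n -addnn leq_add.
have h2 := CS (Phi *m g) (Phi *m z).
have h3 := RIC_up hR (suppIn_sparse hg cI).
have h4 := RIC_up hR (suppIn_sparse hz (leq_trans cT (leq_pmull n (isT : (0 < 2)%N)))).
have V0 := norm2_ge0 v0; have G0 := norm2_ge0 g; have Z0 := norm2_ge0 z.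
have PG0 := norm2_ge0 (Phi *m g); have PZ0 := norm2_ge0 (Phi *m z).
have q0 : 0 < (1 - e) ^+ 2 by rewrite exprn_gt0 // subr_gt0.
have hG' : norm2 g <= (2 * e + e ^+ 2) / (1 - e) ^+ 2 * norm2 v0.
  by rewrite mulrAC ler_pdivlMr // mulrC.
have h5 : `|dot (Phi *m g) (Phi *m z)| <= (1 + e) ^+ 2 * ((2 * e + e ^+ 2) / (1 - e) ^+ 2 * norm2 v0) * norm2 z.
  apply: le_trans h2 _.
  apply: (@le_trans _ _ ((1 + e) * norm2 g * ((1 + e) * norm2 z))).
    by apply: ler_pM.
  have -> : (1 + e) * norm2 g * ((1 + e) * norm2 z) = (1 + e) ^+ 2 * (norm2 g * norm2 z) by ring.
  rewrite -mulrA; apply: ler_wpM2l; first exact: sqr_ge0.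
  exact: ler_wpM2r.
set A := dot (Phi *m v0) (Phi *m z) in h1 *.
set C := dot (Phi *m g) (Phi *m z) in h5 *.
have -> : A - C - dot v0 z = (A - dot v0 z) + (- C) by ring.
apply: le_trans (ler_normD _ _) _; rewrite normrN.
rewrite /gam; set dl := 2 * e + e ^+ 2 in h1 h5 *.
set q := (1 + e) ^+ 2 in h5 *.
set w := dl / (1 - e) ^+ 2 in h5 *.
have -> : (dl + q * dl / (1 - e) ^+ 2) * norm2 v0 * norm2 z =
  dl * (norm2 v0 * norm2 z) + q * (w * norm2 v0) * norm2 z by rewrite /w; ring.
exact: lerD.
Qed.

End Core.


Lemma arith1 a b c : (2 * a < c)%N -> (a + b)%N = c -> (c < 2 * b)%N.
Proof. lia. Qed.

Lemma arith3 x a s i b n : (x + a)%N = (s + i)%N -> (a + b)%N = i -> (i <= 2 * a)%N ->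
  (s <= n)%N -> (a <= n)%N -> (x <= 2 * n)%N.
Proof. lia. Qed.

Section E.
Variable R : realType.

Lemma arith2 (P Q b c : R) : 0 < P -> 0 <= Q -> 0 <= c -> c + 1 <= 2 * b ->
  P * b <= 4 * Q * c -> P < 8 * Q.
Proof.
move=> P0 Q0 c0 hcb h.
rewrite ltNge; apply/negP => hle.
have h1 : 0 <= Q * (2 * b - c - 1) by apply: mulr_ge0 => //; lra.
have h2 : 0 <= (P - 8 * Q) * b by apply: mulr_ge0; lra.
nra.
Qed.

Lemma comp_count k (u : 'cV[R]_k) (J0 B : {set 'I_k}) :
  comparable_set u J0 -> B \subset J0 ->
  sqT u J0 *+ #|B| <= (4 * sqT u B) *+ #|J0|.
Proof.
move=> hc hB.
have h0 : forall i j, i \in B -> j \in J0 -> u j 0 ^+ 2 <= 4 * u i 0 ^+ 2.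
  move=> i j iB jJ.
  have := hc j i jJ (subsetP hB i iB).
  have -> : 2 * `|u i 0| = `|2 * u i 0| by rewrite normrM ger0_norm.
  move/sq_le_abs; rewrite exprMn; congr (_ <= _ * _); rewrite expr2; lra.
have := double_sum h0.
by rewrite /sqT mulr_sumr.
Qed.

Lemma core N d n K (Phi : 'M[R]_(N, d)) e (v y : 'cV[R]_d) (I J J0 : {set 'I_d}) :
  RIC Phi (2 * n) e -> (0 < n)%N -> (n <= 4 ^ K)%N ->
  0 <= 1 - gam e -> (K.+1)%:R * (8 * gam e ^+ 2) <= (1 - gam e) ^+ 2 ->
  sparse n v -> suppIn y I ->
  (forall h, suppIn h I -> dot (Phi *m v - Phi *m y) (Phi *m h) = 0) ->
  (#|I| <= 2 * #|I :&: supp v|)%N ->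
  Phi *m v - Phi *m y != 0 ->
  romp_identify n (Phi^T *m (Phi *m v - Phi *m y)) J ->
  romp_regularize (Phi^T *m (Phi *m v - Phi *m y)) J J0 ->
  [/\ J0 != set0, J0 :&: I = set0 & (#|J0| <= 2 * #|J0 :&: supp v|)%N].
Proof.
move=> hR n0 hK hg0 hnum hv hy horth hI hr hid hreg.
have [e0 e1] := RIC_e hR.
set r := Phi *m v - Phi *m y in horth hr hid hreg.
set u := Phi^T *m r in hid hreg.
have uI : forall i, i \in I -> u i 0 = 0.
  move=> i iI; rewrite -(dot_delta u i) dot_trmx; apply: horth.
  by move=> j jI; rewrite mxE; case: eqP => // ej; rewrite ej iI in jI.
have [Jnz cJ] : J \subset [set i | u i 0 != 0] /\ (#|J| <= n)%N.
  move: hid; rewrite /romp_identify; case: ifP => hnz.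
    by move=> ->; split.
  case=> hJ hmax; split; last by rewrite hJ.
  apply/subsetP => i iJ; rewrite inE; apply/negP => /eqP ui0.
  move/negbT: hnz; rewrite -ltnNge => hnz.
  have : [set i | u i 0 != 0] \subset J.
    apply/subsetP => j; rewrite inE; apply: contraLR => jJ.
    have := hmax i j iJ jJ; rewrite ui0 normr0 normr_le0 => /eqP ->.
    by rewrite eqxx.
  move/subset_leq_card; rewrite hJ => h.
  by move: (leq_ltn_trans h hnz); rewrite ltnn.
have er0 : r = Phi *m (v - y) by rewrite mulmxBr.
have [i1 ui1] : exists i, u i 0 != 0.
  case: (pickP (fun i => u i 0 != 0)) => [i hi|hall]; first by exists i.
  exfalso; move/negP: hr; apply; apply/eqP; apply: sq_eq0.
  rewrite /sq [X in dot _ X]er0 -dot_trmx -/u; apply: dot_zero => i.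
  by have /negbFE/eqP -> := hall i; rewrite mul0r.
have [j1 j1J] : exists j, j \in J.
  move: hid; rewrite /romp_identify; case: ifP => hnz.
    by move=> ->; exists i1; rewrite inE.
  case=> hJ _; have : (0 < #|J|)%N.
    by rewrite hJ.
  by case/card_gt0P => j jJ; exists j.
have J0sub : J0 \subset J by case: hreg.
have J0cmp : comparable_set u J0 by case: hreg => _ [].
have J0nz : forall i, i \in J0 -> u i 0 != 0.
  move=> i iJ0; have := subsetP Jnz i (subsetP J0sub i iJ0); by rewrite inE.
have hJ0pos : 0 < sqT u J0.
  have := @reg_max _ _ u J J0 hreg [set j1]; rewrite sqT1 sub1set j1J.
  move=> /(_ isT (@comparable1 _ _ u j1)) h; apply: lt_le_trans h.
  rewrite lt_def sqr_ge0 andbT sqrf_eq0.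
  by have := subsetP Jnz j1 j1J; rewrite inE.
have c1 : J0 != set0 by apply: contraTneq hJ0pos => ->; rewrite sqT0 ltxx.
have c2 : J0 :&: I = set0.
  apply/setP => i; rewrite !inE; apply/negbTE/negP => /andP[iJ0 iI].
  by move: (J0nz i iJ0); rewrite uI // eqxx.
split => //.
have eIS := cardsID (supp v) I.
have cIS : (#|I :&: supp v| <= n)%N.
  by apply: leq_trans (subset_leq_card (subsetIr _ _)) hv.
have cI2 : (#|I| <= 2 * n)%N by apply: leq_trans hI _; rewrite leq_mul2l cIS orbT.
have cS2 : (#|supp v :|: I| <= 2 * n)%N.
  have eU := cardsUI (supp v) I; rewrite [supp v :&: I]setIC in eU.
  exact: arith3 eU eIS hI hv cIS.
set T0 := supp v :\: I.
set v0 := restrict v (~: I).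
set g := y - restrict v I.
have cT0 : (#|T0| <= n)%N by apply: leq_trans (subset_leq_card (subsetDl _ _)) hv.
have hv0 : suppIn v0 T0.
  move=> i hi; rewrite mxE in_setC; case: ifP => // iI.
  by move: hi; rewrite !inE iI /= negbK => /eqP.
have hg : suppIn g I by move=> i hi; rewrite !mxE hy // (negPf hi) subr0.
have er : r = Phi *m v0 - Phi *m g.
  have ev : v = v0 + restrict v I.
    apply/matrixP => i j; rewrite (ord1 j) !mxE in_setC.
    by case: (i \in I); rewrite ?addr0 ?add0r.
  transitivity (Phi *m (v0 + restrict v I) - Phi *m y); first by rewrite -ev.
  by rewrite mulmxDr mulmxBr opprB addrA.
have V0 := norm2_ge0 v0; have G0 := norm2_ge0 g.
have hG : (1 - e) ^+ 2 * norm2 g <= (2 * e + e ^+ 2) * norm2 v0.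
  have orth_g := horth g hg; rewrite er dotBl in orth_g.
  have hp := polar (T := supp v :|: I) hR (suppInS hv0 (subset_trans (subsetDl _ _) (subsetUl _ _)))
    (suppInS hg (subsetUr _ _)) cS2.
  have dvg : dot v0 g = 0.
    apply: dot_zero => i; case iI: (i \in I).
      by rewrite /v0 mxE in_setC iI mul0r.
    by rewrite hg ?iI ?mulr0.
  rewrite dvg subr0 in hp.
  have hA : sq (Phi *m g) = dot (Phi *m v0) (Phi *m g).
    by apply/eqP; rewrite eq_sym -subr_eq0; apply/eqP.
  have [lg _] := RIC_sq hR (suppIn_sparse hg cI2).
  have hn := ler_norm (dot (Phi *m v0) (Phi *m g)).
  rewrite -norm2_sq in lg.
  have [G00|Gn] := eqVneq (norm2 g) 0.
    by rewrite G00 mulr0; apply: mulr_ge0 => //; nra.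
  have Gp : 0 < norm2 g by rewrite lt_def Gn G0.
  rewrite -(ler_pM2r Gp).
  have : (1 - e) ^+ 2 * norm2 g ^+ 2 <= (2 * e + e ^+ 2) * (norm2 v0 * norm2 g).
    by apply: le_trans lg _; rewrite hA; apply: le_trans hn hp.
  by rewrite [norm2 g ^+ 2]expr2 !mulrA.
have inn : forall (z : 'cV[R]_d) (T : {set 'I_d}), suppIn z T -> (#|T| <= n)%N ->
    `|dot u z - dot v0 z| <= gam e * norm2 v0 * norm2 z.
  move=> z T hz cT.
  have := inner hR hv0 hg hz cI2 cT0 cT hG.
  by rewrite -er -dot_trmx.
have Vp : 0 < norm2 v0.
  rewrite lt_def V0 andbT; apply/eqP => V00.
  have g0 : norm2 g = 0.
    apply/le_anti; rewrite G0 andbT.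
    have q0 : 0 < (1 - e) ^+ 2 by rewrite exprn_gt0 // subr_gt0.
    by rewrite -(ler_pM2l q0) mulr0; move: hG; rewrite V00 mulr0.
  move/negP: hr; apply; apply/eqP; rewrite er.
  have -> : v0 = 0 by apply: sq_eq0; rewrite -norm2_sq V00 expr0n.
  have -> : g = 0 by apply: sq_eq0; rewrite -norm2_sq g0 expr0n.
  by rewrite mulmx0 subr0.
have low : (1 - gam e) ^+ 2 * norm2 v0 ^+ 2 <= sqT u J.
  apply: le_trans (top_n hid cT0).
  have := inn v0 T0 hv0 cT0.
  rewrite (dot_restrict u hv0).
  have cs := CS (restrict u T0) v0; rewrite norm2_restrict in cs.
  have -> : dot v0 v0 = norm2 v0 ^+ 2 by rewrite norm2_sq.
  have sT := sqT_ge0 u T0; have sq2 := sqr_sqrtr sT; have ss0 := sqrtr_ge0 (sqT u T0).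
  move: cs sq2 ss0; move: (Num.sqrt (sqT u T0)) => s cs sq2 ss0.
  move: (dot (restrict u T0) v0) cs => dd cs h.
  rewrite -sq2.
  have h1 : (1 - gam e) * norm2 v0 * norm2 v0 <= s * norm2 v0.
    have := ler_norm dd; have := ler_normr (dd - norm2 v0 ^+ 2) ; rewrite ler_norml in h.
    move/andP: h => [h _] _ hd; rewrite expr2 in h; nra.
  have h2 : (1 - gam e) * norm2 v0 <= s by rewrite -(ler_pM2r Vp).
  have h3 : 0 <= (1 - gam e) * norm2 v0 by apply: mulr_ge0.
  rewrite -exprMn; rewrite !expr2; nra.
set B := J0 :\: supp v.
have cB : (#|B| <= n)%N.
  apply: leq_trans cJ; apply: subset_leq_card; apply: subset_trans J0sub; apply: subsetDl.
have up : sqT u B <= gam e ^+ 2 * norm2 v0 ^+ 2.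
  have := inn (restrict u B) B (@suppIn_restrict _ _ u B) cB.
  rewrite dot_restrict_self norm2_restrict.
  have -> : dot v0 (restrict u B) = 0.
    apply: dot_zero => i; case iB: (i \in B); last first.
      by rewrite (@suppIn_restrict _ _ u B i) ?iB // mulr0.
    rewrite hv0 ?mul0r //; move: iB; rewrite !inE => /andP[hs _].
    by apply/negP => /andP[_ hs']; move: hs; rewrite hs'.
  rewrite subr0.
  have sT := sqT_ge0 u B; have sq2 := sqr_sqrtr sT; have ss0 := sqrtr_ge0 (sqT u B).
  rewrite ger0_norm //.
  move: sq2 ss0; move: (Num.sqrt (sqT u B)) => q sq2 ss0 h.
  rewrite -sq2 in h *.
  have gm0 : 0 <= gam e * norm2 v0.
    have : 0 <= gam e by rewrite /gam; apply: addr_ge0; [nra|]; apply: divr_ge0; [nra|apply: sqr_ge0].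
    by move=> ?; apply: mulr_ge0.
  have hq : q <= gam e * norm2 v0.
    have [q00|qn] := eqVneq q 0; first by rewrite q00.
    have qp : 0 < q by rewrite lt_def qn ss0.
    by rewrite -(ler_pM2r qp); rewrite expr2 in h; rewrite mulrC.
  by rewrite -exprMn; rewrite !expr2; nra.
have reg := reg_bound hreg j1J (leq_trans cJ hK).
have cmp := comp_count J0cmp (subsetDl J0 (supp v)).
rewrite leqNgt; apply/negP => hlt.
have eJ0 := cardsID (supp v) J0.
have hB2 := arith1 hlt eJ0.
have hP8 : sqT u J0 < 8 * sqT u B.
  apply: (arith2 (b := #|B|%:R) (c := #|J0|%:R)) => //.
  - exact: sqT_ge0.
  - have : ((#|J0|.+1)%:R <= (2 * #|B|)%:R :> R) by rewrite ler_nat.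
    by rewrite natrM -natr1.
  - by rewrite !mulr_natr.
have k1 : 0 < K.+1%:R :> R by rewrite ltr0n.
have d1 : sqT u J < K.+1%:R * (8 * sqT u B).
  by apply: le_lt_trans reg _; rewrite ltr_pM2l.
have d2 : K.+1%:R * (8 * sqT u B) <= K.+1%:R * (8 * gam e ^+ 2) * norm2 v0 ^+ 2.
  rewrite -!mulrA; apply: ler_wpM2l; first exact: ltW.
  by apply: ler_wpM2l => //; lra.
have d3 : K.+1%:R * (8 * gam e ^+ 2) * norm2 v0 ^+ 2 <= (1 - gam e) ^+ 2 * norm2 v0 ^+ 2.
  by apply: ler_wpM2r => //; exact: sqr_ge0.
have := lt_le_trans (le_lt_trans low d1) (le_trans d2 d3).
by rewrite ltxx.
Qed.


End E.


Section F.
Variable R : realType.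

Lemma subr_ge0_of3 (x y : R) : x <= y -> 0 <= y - x.
Proof. by rewrite subr_ge0. Qed.

Lemma subr_gt0_of' (x y : R) : x < y -> 0 < y - x.
Proof. by rewrite subr_gt0. Qed.

Lemma num1 (e : R) : 0 < e -> e * e <= 9 / 5000 -> e <= 17 / 400.
Proof.
move=> e0 e2; rewrite leNgt; apply/negP => h.
have p : 0 < e + 17 / 400 by lra.
have := mulr_gt0 (subr_gt0_of' h) p; lra.
Qed.

Lemma num_w (e : R) : 0 < e -> e <= 17 / 400 ->
  0 <= (1 + e) ^+ 2 / (1 - e) ^+ 2 <= 119 / 100.
Proof.
move=> e0 e1.
have q0 : 0 < (1 - e) ^+ 2 by rewrite exprn_gt0 //; lra.
apply/andP; split; first by apply: divr_ge0; [exact: sqr_ge0|exact: ltW].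
rewrite ler_pdivrMr // !expr2.
have := sqr_ge0 e; rewrite expr2; lra.
Qed.

Lemma num_d (e : R) : 0 < e -> e <= 17 / 400 ->
  0 <= 2 * e + e ^+ 2 <= 817 / 400 * e.
Proof.
move=> e0 e1; have := mulr_ge0 (ltW e0) (subr_ge0_of2 e1).
have := sqr_ge0 e; rewrite !expr2 => h1 h2; apply/andP; split; lra.
Qed.

Lemma num2 (e : R) : 0 < e -> e <= 17 / 400 -> 0 <= gam e <= 9 / 2 * e.
Proof.
move=> e0 e1.
have /andP[hw0 hw] := num_w e0 e1.
have /andP[hd0 hd] := num_d e0 e1.
have hg : gam e = (2 * e + e ^+ 2) * (1 + (1 + e) ^+ 2 / (1 - e) ^+ 2).
  by rewrite /gam [RHS]mulrDr mulr1 mulrA (mulrC (2 * e + e ^+ 2)).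
rewrite hg; move: hw0 hw hd0 hd; move: ((1 + e) ^+ 2 / (1 - e) ^+ 2) (2 * e + e ^+ 2) => w d.
move=> hw0 hw hd0 hd.
apply/andP; split; first by apply: mulr_ge0 => //; lra.
apply: (@le_trans _ _ ((817 / 400 * e) * (219 / 100))).
  by apply: ler_pM => //; lra.
lra.
Qed.

Lemma num3 (g e : R) : 0 <= g -> g <= 9 / 2 * e -> e <= 17 / 400 ->
  [/\ 0 <= 1 - g, 16 / 25 <= (1 - g) ^+ 2 & g ^+ 2 <= 81 / 4 * e ^+ 2].
Proof.
move=> g0 g1 e1.
have a : 0 <= 1 - g - 4 / 5 by lra.
have b : 0 <= 1 - g + 4 / 5 by lra.
have c : 0 <= 9 / 2 * e - g by lra.
have d : 0 <= 9 / 2 * e + g by lra.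
have := mulr_ge0 a b; have := mulr_ge0 c d.
rewrite !expr2 => h1 h2; split; lra.
Qed.

Lemma numeric (e L k : R) : 0 < e -> e ^+ 2 * L = 9 / 10000 -> 1 / 2 <= L ->
  3 / 4 * k <= L -> (k = 0 \/ 1 <= k) ->
  0 <= 1 - gam e /\ (k + 2) * (8 * gam e ^+ 2) <= (1 - gam e) ^+ 2.
Proof.
move=> e0 hL L2 Lk hk.
have L0 : 0 < L by move: L2; clear; lra.
have e2 : e ^+ 2 <= 9 / 5000.
  have : e ^+ 2 * L <= 9 / 5000 * L by rewrite hL; move: L2; clear; lra.
  by rewrite ler_pM2r.
have e1 : e <= 17 / 400 by apply: num1 => //; rewrite -expr2.
have /andP[g0 g45] := num2 e0 e1.
have [h0 h1 h2] := num3 g0 g45 e1.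
split => //.
have k0 : 0 <= k by case: hk => [->|?]; [rewrite lexx|apply: le_trans ler01 _].
have h3 : (k + 2) * 162 * (9 / 10000) <= 16 / 25 * L.
  by case: hk => [->|hk]; [move: L2 Lk | move: L2 Lk hk]; clear; lra.
have h4 : (k + 2) * 162 * e ^+ 2 <= 16 / 25.
  have ee : (k + 2) * 162 * e ^+ 2 * L = (k + 2) * 162 * (9 / 10000) by rewrite -hL; ring.
  by rewrite -(ler_pM2r L0) ee.
apply: le_trans h1.
apply: le_trans h4.
have h : 8 * gam e ^+ 2 <= 162 * e ^+ 2 by move: h2; clear; lra.
rewrite -mulrA; apply: ler_wpM2l => //; move: k0; clear; lra.
Qed.

End F.


Section G.
Variable R : realType.

Lemma ln_lb (x : R) : 0 < x -> 1 - x^-1 <= ln x.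
Proof.
move=> x0.
have hx : -1 < x^-1 - 1 by rewrite ltrBrDr addrC subrr invr_gt0.
have := le_ln1Dx hx; rewrite addrC subrK lnV ?posrE //.
move=> h; lra.
Qed.

Lemma param_facts (n : nat) (e : R) : e = 3%:R / 100%:R / Num.sqrt (ln (n%:R : R)) -> 0 < e ->
  [/\ (1 < n)%N, e ^+ 2 * ln (n%:R : R) = 9 / 10000 & 1 / 2 <= ln (n%:R : R)].
Proof.
move=> he e0.
have sL : 0 < Num.sqrt (ln (n%:R : R)).
  rewrite lt_def sqrtr_ge0 andbT; apply/eqP => h.
  by move: e0; rewrite he h invr0 mulr0 ltxx.
have L0 : 0 < ln (n%:R : R) by rewrite -sqrtr_gt0.
have n1 : (1 < n)%N.
  rewrite ltnNge; apply/negP => h.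
  have := ln_le0 (_ : (n%:R : R) <= 1); rewrite lern1 => /(_ h).
  by rewrite leNgt L0.
split => //.
  rewrite he; move: sL (sqr_sqrtr (ltW L0)); move: (Num.sqrt _) => s sL <-.
  by field; rewrite gt_eqF.
have n2 : (2%:R : R) <= n%:R by rewrite ler_nat.
apply: le_trans (ln_lb (_ : 0 < (n%:R : R)))  ; last by lra.
have : (n%:R : R)^-1 <= 2^-1 by rewrite lef_pV2 ?posrE //; lra.
lra.
Qed.

Lemma K_facts (n : nat) : (1 < n)%N ->
  exists k : nat, (n <= 4 ^ k.+1)%N /\ 3 / 4 * (k%:R : R) <= ln (n%:R : R).
Proof.
move=> n1; exists (trunc_log 4 n.-1); split.
  have := trunc_log_ltn n.-1 (isT : (1 < 4)%N).
  by case: n n1.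
have h1 : (4 ^ trunc_log 4 n.-1 <= n)%N.
  apply: leq_trans (trunc_logP (isT : (1 < 4)%N) _) _; first by case: n n1.
  exact: leq_pred.
set k := trunc_log 4 n.-1 in h1 *.
have l4 : 3 / 4 <= ln (4 : R).
  apply: le_trans (ln_lb _) => //; rewrite (_ : (4 : R)^-1 = 1 / 4) ?div1r //; lra.
have : ln ((4 ^ k)%:R : R) <= ln (n%:R : R).
  have n0 : (0 < n)%N by apply: ltnW.
  rewrite ler_ln ?posrE ?ltr0n ?expn_gt0 ?n0 //.
  by rewrite ler_nat.
rewrite natrX lnXn ?ltr0n // => h.
apply: le_trans h; rewrite -(mulr_natr (ln (4 : R)) k).
by apply: ler_wpM2r => //; exact: ler0n.
Qed.

End G.


Lemma arith4 x i j y a b : x = (i + j)%N -> y = (a + b)%N -> (i <= 2 * a)%N -> (j <= 2 * b)%N ->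
  (x <= 2 * y)%N.
Proof. move=> -> -> h1 h2; rewrite mulnDr; exact: leq_add. Qed.

Section H.
Variable R : realType.

Lemma supp_suppIn k (w : 'cV[R]_k) (T : {set 'I_k}) : supp w \subset T -> suppIn w T.
Proof.
move=> h i hi; apply/eqP; apply: contraNT hi => hw.
by apply: (subsetP h); rewrite inE.
Qed.

Lemma suppIn_supp k (w : 'cV[R]_k) (T : {set 'I_k}) : suppIn w T -> supp w \subset T.
Proof.
move=> h; apply/subsetP => i; rewrite inE; apply: contraLR => /h ->.
by rewrite negbK.
Qed.

Lemma argmin_orth N d (Phi : 'M[R]_(N, d)) (x : 'cV[R]_N) T (y : 'cV[R]_d) :
  is_argmin Phi x T y -> forall h, suppIn h T -> dot (x - Phi *m y) (Phi *m h) = 0.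
Proof.
case=> hs hmin h hh.
have key : forall t, 2 * (t * dot (x - Phi *m y) (Phi *m h)) <= t ^+ 2 * sq (Phi *m h).
  move=> t.
  have hz : supp (y + t *: h) \subset T.
    apply: suppIn_supp; apply: suppInD; [exact: supp_suppIn|exact: suppInZ].
  have := hmin _ hz.
  rewrite !norm2E ler_sqrt ?sq_ge0 // mulmxDr -scalemxAr opprD addrA.
  set r := x - Phi *m y.
  rewrite [sq (r - _)]sqB sqZ dotZr; lra.
apply: (@hom0 _ _ (sq (Phi *m h)) 1 (sq_ge0 _) ler01) => t.
have k1 := key t; have k2 := key (- t).
rewrite sqrrN in k2.
rewrite mul1r ler_norml; apply/andP; split; lra.
Qed.

Lemma reach_inv N d n K (Phi : 'M[R]_(N, d)) e (v : 'cV[R]_d) I r :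
  RIC Phi (2 * n) e -> (0 < n)%N -> (n <= 4 ^ K)%N ->
  0 <= 1 - gam e -> (K.+1)%:R * (8 * gam e ^+ 2) <= (1 - gam e) ^+ 2 ->
  sparse n v -> romp_reach Phi (Phi *m v) n I r ->
  exists y, [/\ suppIn y I, r = Phi *m v - Phi *m y,
    (forall h, suppIn h I -> dot r (Phi *m h) = 0) &
    (#|I| <= 2 * #|I :&: supp v|)%N].
Proof.
move=> hR n0 hK hg hnum hv.
elim=> [|I' r' J J0 y' _ [y [hy er horth hI]] hr hid hreg hargmin].
  exists 0; split.
  - by move=> i _; rewrite mxE.
  - by rewrite mulmx0 subr0.
  - move=> h hh; have -> : h = 0 by apply/matrixP => i j; rewrite (ord1 j) mxE hh ?inE.
    by rewrite mulmx0 dotC dot0l.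
  - by rewrite set0I cards0.
rewrite er in hr hid hreg horth.
have [c1 c2 c3] := core hR n0 hK hg hnum hv hy horth hI hr hid hreg.
exists y'; split => //.
- by case: hargmin => hs _; exact: supp_suppIn.
- exact: argmin_orth hargmin.
have eU := cardsUI I' J0.
have e0 : I' :&: J0 = set0 by rewrite setIC.
rewrite e0 cards0 addn0 in eU.
rewrite setIUl.
have eU2 := cardsUI (I' :&: supp v) (J0 :&: supp v).
have e02 : (I' :&: supp v) :&: (J0 :&: supp v) = set0.
  apply/eqP; rewrite -subset0 -e0; apply/subsetP => i; rewrite !inE.
  by case/andP => /andP[-> _] /andP[-> _].
rewrite e02 cards0 addn0 in eU2.
exact: arith4 eU eU2 hI c3.
Qed.

End H.

Unset Implicit Arguments.

Theorem theorem3p1 (R : realType) (N d n : nat) (Phi : 'M[R]_(N, d)) (v : 'cV[R]_d) :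
  RIC Phi (2 * n)%N (3%:R / 100%:R / Num.sqrt (ln (n%:R : R))) ->
  v != 0 -> sparse n v ->
  forall (I : {set 'I_d}) (r : 'cV[R]_N),
    romp_reach Phi (Phi *m v) n I r -> r != 0 ->
    forall J J0 : {set 'I_d},
      romp_identify n (Phi^T *m r) J ->
      romp_regularize (Phi^T *m r) J J0 ->
      [/\ J0 != set0, J0 :&: I = set0 & (#|J0| <= 2 * #|J0 :&: supp v|)%N].
Proof.
move=> hR _ hv I r hreach hr J J0 hid hreg.
have [e0 _] := RIC_e hR.
have [n1 hL L2] := param_facts (erefl _) e0.
have [k [hK Lk]] := K_facts R n1.
have hk : (k%:R : R) = 0 \/ 1 <= (k%:R : R).
  by case: k {hK Lk} => [|k]; [left|right; rewrite ler1n].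
have [hg hnum] := numeric e0 hL L2 Lk hk.
have n0 : (0 < n)%N by apply: ltnW.
have hnum' : (k.+2)%:R * (8 * gam (3%:R / 100%:R / Num.sqrt (ln (n%:R : R))) ^+ 2)
    <= (1 - gam (3%:R / 100%:R / Num.sqrt (ln (n%:R : R)))) ^+ 2.
  by rewrite -addn2 natrD.
have [y [hy er horth hI]] := reach_inv hR n0 hK hg hnum' hv hreach.
rewrite er in hr hid hreg horth.
exact: core hR n0 hK hg hnum' hv hy horth hI hr hid hreg.
Qed.
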